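(* Let $s,n,k$ be positive integers, $\Gamma=\mathbb{Z}_{sn}\mathbin{\mathrm{wr}}\mathbb{Z}^k$, $G=\mathbb{Z}_n\mathbin{\mathrm{wr}}\mathbb{Z}^k$, with torsion subgroups $\Sigma$ and $\Omega$ respectively, and let $\Pi\colon\Gamma\to G$ and $\pi\colon\Sigma\to\Omega$ be the coefficient-reduction maps (defined in the context). Let $\varphi$ be an automorphism of $\Gamma$. Then there exists an automorphism $\psi$ of $G$ such that $\Pi\circ\varphi=\psi\circ\Pi$, $\pi\circ\varphi'=\psi'\circ\pi$ and $\overline{\varphi}=\overline{\psi}$. Moreover, $R(\varphi)\ge R(\psi)$.
   Context: For a positive integer $m$, $\mathbb{Z}_m\mathbin{\mathrm{wr}}\mathbb{Z}^k=\bigoplus_{x\in\mathbb{Z}^k}(\mathbb{Z}_m)_x\rtimes_\alpha\mathbb{Z}^k$ is the restricted wreath product, where $\alpha(z)$ maps $(\mathbb{Z}_m)_x$ onto $(\mathbb{Z}_m)_{z+x}$; its torsion subgroup is $\bigoplus_x(\mathbb{Z}_m)_x$, which is characteristic. For an automorphism $\varphi$, $\varphi'$ denotes its restriction to the torsion subgroup and $\overline{\varphi}$ the induced automorphism of the quotient $\mathbb{Z}^k$. With $\Delta_x,\delta_x$ the generators of $(\mathbb{Z}_{sn})_x$, $(\mathbb{Z}_n)_x$: $\pi(\sum_i k_i\Delta_{x_i})=\sum_i (k_i\bmod n)\delta_{x_i}$ and $\Pi(\sigma,z)=(\pi(\sigma),z)$. Two elements $g_1,g_2$ are $\varphi$-twisted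 conjugate if $g_1=hg_2\varphi(h^{-1})$ for some $h$; $R(\varphi)$ is the number of such classes (Reidemeister number). *)

(* Defs.v *)
From HB Require Import structures.
From mathcomp Require Import all_boot all_order all_algebra.
From mathcomp Require Import finmap.
From mathcomp Require Import boolp classical_sets cardinality.

Set Implicit Arguments.
Unset Strict Implicit.
Unset Printing Implicit Defensive.

Import GRing.Theory.
Local Open Scope ring_scope.

Definition Zk (k : nat) := 'rV[int]_k.

(* Z_m (for m > 0): ordinals 'I_m with modular arithmetic
   ('I_(m.-1.+1) is convertible-equal to 'I_m when m > 0, and carries the
   canonical zmodType structure of Z/mZ). *)
Definition coef (m : nat) := 'I_(m.-1.+1).

(* Elements of the torsion subgroup  (+)_{x in Z^k} (Z_m)_x :
   finitely supported functions Z^k -> Z_m. *)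
Definition lamp (m k : nat) := {fsfun Zk k -> coef m with 0%R}.

Definition mkfs (m k : nat) (S : {fset Zk k}) (h : Zk k -> coef m) : lamp m k :=
  fsfun_of_fun fsfun_key S h (fun _ => 0%R).

Definition lamp0 (m k : nat) : lamp m k := mkfs fset0 (fun _ => 0%R).

Definition lamp_add (m k : nat) (a b : lamp m k) : lamp m k :=
  mkfs (finsupp a `|` finsupp b)%fset (fun x => a x + b x).

Definition lamp_opp (m k : nat) (a : lamp m k) : lamp m k :=
  mkfs (finsupp a) (fun x => - a x).

Definition alpha (m k : nat) (z : Zk k) (a : lamp m k) : lamp m k :=
  mkfs [fset (y + z)%R | y in finsupp a]%fset (fun x => a (x - z)).

(* The restricted wreath product Z_m wr Z^k = (+)_x (Z_m)_x  ><|_alpha  Z^k. *)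
Definition wr (m k : nat) := (lamp m k * Zk k)%type.

Definition wr_mul (m k : nat) (g h : wr m k) : wr m k :=
  (lamp_add g.1 (alpha g.2 h.1), g.2 + h.2).
Definition wr_one (m k : nat) : wr m k := (lamp0 m k, 0).
Definition wr_inv (m k : nat) (g : wr m k) : wr m k :=
  (alpha (- g.2) (lamp_opp g.1), - g.2).

Definition is_aut (m k : nat) (f : wr m k -> wr m k) : Prop :=
  bijective f /\ (forall g h, f (wr_mul g h) = wr_mul (f g) (f h)).

(* phi' : restriction of phi to the (characteristic) torsion subgroup
   {(a, 0)}; its value is the lamp component of phi (a, 0). *)
Definition restr_tors (m k : nat) (f : wr m k -> wr m k) (a : lamp m k) : lamp m k :=
  (f (a, 0)).1.

(* bar phi : induced automorphism of the quotient Z^k = wr / torsion,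
   computed on the coset representative (0, z). *)
Definition induced_quot (m k : nat) (f : wr m k -> wr m k) (z : Zk k) : Zk k :=
  (f (lamp0 m k, z)).2.

Definition red_pi (s : nat) {n k : nat} (a : lamp (s * n) k) : lamp n k :=
  mkfs (finsupp a) (fun x => (inord (val (a x) %% n) : coef n)).

Arguments red_pi s {n k} a.

Definition red_Pi (s : nat) {n k : nat} (g : wr (s * n) k) : wr n k :=
  (red_pi s g.1, g.2).

Definition tconj (m k : nat) (f : wr m k -> wr m k) (g1 g2 : wr m k) : Prop :=
  exists h : wr m k, g1 = wr_mul (wr_mul h g2) (f (wr_inv h)).

(* The set of f-twisted conjugacy classes; R(f) is its cardinal. *)
Definition reid_classes (m k : nat) (f : wr m k -> wr m k) : set (set (wr m k)) :=
  range (fun g0 : wr m k => [set g | tconj f g g0]%classic).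

Arguments red_Pi s {n k} g.

(* Main.v *)
Require Import Defs.
From HB Require Import structures.
From mathcomp Require Import all_boot all_order all_algebra.
From mathcomp Require Import finmap.
From mathcomp Require Import boolp classical_sets cardinality.
Set Implicit Arguments. Unset Strict Implicit. Unset Printing Implicit Defensive.
Import GRing.Theory.
Section Wr.
Local Open Scope ring_scope.
Variables (m k : nat).

Lemma mkfsE (S : {fset Zk k}) (h : Zk k -> coef m) x :
  mkfs S h x = if x \in S then h x else 0.
Proof. by rewrite /mkfs fsfun_fun. Qed.

Lemma lamp0E x : lamp0 m k x = 0.
Proof. by rewrite /lamp0 mkfsE. Qed.

Lemma notsupp (a : lamp m k) x : x \notin finsupp a -> a x = 0.
Proof. by rewrite memNfinsupp => /eqP. Qed.

Lemma lamp_addE (a b : lamp m k) x : lamp_add a b x = a x + b x.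
Proof.
rewrite /lamp_add mkfsE in_fsetU; case: ifP => // /negbT.
by rewrite negb_or => /andP[/notsupp -> /notsupp ->]; rewrite addr0.
Qed.

Lemma lamp_oppE (a : lamp m k) x : lamp_opp a x = - a x.
Proof.
by rewrite /lamp_opp mkfsE; case: ifP => // /negbT /notsupp ->; rewrite oppr0.
Qed.

Lemma alphaE z (a : lamp m k) x : alpha z a x = a (x - z).
Proof.
rewrite /alpha mkfsE; case: ifP => // /negbT H; apply/esym/notsupp.
apply: contra H => H; apply/imfsetP; exists (x - z) => //.
by rewrite subrK.
Qed.

Definition wone := wr_one m k.

Lemma wr_ext (g h : wr m k) : (forall x, g.1 x = h.1 x) -> g.2 = h.2 -> g = h.
Proof. by case: g h => [a z] [b w] /= /fsfunP -> ->. Qed.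

Ltac wsimp := rewrite /= ?lamp_addE ?alphaE ?lamp_oppE ?lamp0E ?alphaE ?lamp_addE.

Lemma wmulA (g h l : wr m k) : wr_mul (wr_mul g h) l = wr_mul g (wr_mul h l).
Proof.
apply: wr_ext => [x|]; rewrite /= ?addrA //.
by rewrite !lamp_addE !alphaE lamp_addE alphaE opprD addrA addrA.
Qed.

Lemma wmul1 (g : wr m k) : wr_mul (wr_one m k) g = g.
Proof. by apply: wr_ext => [x|]; rewrite /= ?add0r // lamp_addE lamp0E alphaE subr0 add0r. Qed.

Lemma wmulg1 (g : wr m k) : wr_mul g (wr_one m k) = g.
Proof. by apply: wr_ext => [x|]; rewrite /= ?addr0 // lamp_addE alphaE lamp0E addr0. Qed.

Lemma wmulVg (g : wr m k) : wr_mul (wr_inv g) g = wr_one m k.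
Proof.
apply: wr_ext => [x|]; rewrite /= ?addNr // lamp_addE !alphaE lamp_oppE lamp0E.
by rewrite opprK addNr.
Qed.

Lemma wmulgV (g : wr m k) : wr_mul g (wr_inv g) = wr_one m k.
Proof.
apply: wr_ext => [x|]; rewrite /= ?subrr // lamp_addE !alphaE lamp_oppE lamp0E.
by rewrite opprK subrK subrr.
Qed.

Lemma wuniq (g h : wr m k) : wr_mul g h = wr_one m k -> g = wr_inv h.
Proof.
by move=> E; rewrite -[g]wmulg1 -(wmulgV h) -wmulA E wmul1.
Qed.

Lemma winvM (g h : wr m k) : wr_inv (wr_mul g h) = wr_mul (wr_inv h) (wr_inv g).
Proof.
apply/esym/wuniq; rewrite wmulA -(wmulA (wr_inv g)) wmulVg wmul1 wmulVg //.
Qed.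

Lemma winv1 : wr_inv (wr_one m k) = wr_one m k.
Proof. by apply/esym/wuniq; rewrite wmul1. Qed.

Lemma wcancel (g h l : wr m k) : wr_mul g h = wr_mul g l -> h = l.
Proof.
by move=> E; rewrite -(wmul1 h) -(wmulVg g) wmulA E -wmulA wmulVg wmul1.
Qed.

End Wr.

Definition whom (m1 m2 k : nat) (f : wr m1 k -> wr m2 k) :=
  forall g h, f (wr_mul g h) = wr_mul (f g) (f h).

Lemma whom1 m1 m2 k (f : wr m1 k -> wr m2 k) : whom f -> f (wr_one m1 k) = wr_one m2 k.
Proof.
move=> H; apply: (@wcancel _ _ (f (wr_one m1 k))).
by rewrite -H wmul1 wmulg1.
Qed.

Lemma whomV m1 m2 k (f : wr m1 k -> wr m2 k) g : whom f -> f (wr_inv g) = wr_inv (f g).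
Proof. by move=> H; apply: wuniq; rewrite -H wmulVg whom1. Qed.
Section Vals.
Local Open Scope ring_scope.

Lemma valD (m:nat) (u v : coef m) : val (u + v) = ((val u + val v) %% m.-1.+1)%N.
Proof. by []. Qed.
Lemma valN (m:nat) (u : coef m) : val (- u) = ((m.-1.+1 - val u) %% m.-1.+1)%N.
Proof. by []. Qed.
Lemma valMn (m:nat) (u : coef m) j : val (u *+ j) = ((val u * j) %% m.-1.+1)%N.
Proof. by rewrite Zp_mulrn. Qed.
Lemma val0 (m:nat) : val (0 : coef m) = 0%N.
Proof. by []. Qed.

Fixpoint wpow m k (g : wr m k) j : wr m k :=
  if j is j'.+1 then wr_mul g (wpow g j') else wr_one m k.

Lemma hom_pow m1 m2 k (f : wr m1 k -> wr m2 k) g j :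
  whom f -> f (wpow g j) = wpow (f g) j.
Proof. by move=> H; elim: j => [|j IH] /=; rewrite ?whom1 // H IH. Qed.

Lemma wpow_tors1 m k (a : lamp m k) j x : (wpow (a, 0) j).1 x = a x *+ j.
Proof.
elim: j => [|j IH] /=; first by rewrite lamp0E mulr0n.
by rewrite lamp_addE alphaE subr0 IH mulrS.
Qed.

Lemma wpow_tors2 m k (a : lamp m k) j : (wpow (a, 0) j).2 = 0.
Proof. by elim: j => [|j IH] //=; rewrite IH addr0. Qed.

Lemma wpow2 m k (g : wr m k) j i l : (wpow g j).2 i l = g.2 i l *+ j.
Proof.
elim: j => [|j IH] /=; first by rewrite mxE.
by rewrite mxE IH mulrS.
Qed.

Lemma wpow_order m k (a : lamp m k) : wpow (a, 0) m.-1.+1 = wr_one m k.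
Proof.
apply: wr_ext => [x|]; last by rewrite wpow_tors2.
rewrite wpow_tors1 lamp0E; apply: val_inj; rewrite valMn /=.
by rewrite modnMl.
Qed.

Lemma hom_tors m k (f : wr m k -> wr m k) (a : lamp m k) : whom f -> (f (a, 0)).2 = 0.
Proof.
move=> H; have := wpow_order a; move/(congr1 f); rewrite hom_pow // whom1 //.
move=> E; apply/matrixP => i l; have := wpow2 (f (a, 0)) m.-1.+1 i l.
rewrite E /= mxE => /esym/eqP; rewrite Num.Theory.mulrn_eq0 /= => /eqP ->.
by rewrite ?mxE. Qed.
End Vals.
Section Red.
Local Open Scope ring_scope.
Variables (s n k : nat).
Hypotheses (s_gt0 : (0 < s)%N) (n_gt0 : (0 < n)%N).

Lemma pE : (s * n).-1.+1 = (s * n)%N.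
Proof. by rewrite prednK // muln_gt0 s_gt0. Qed.
Lemma nE : n.-1.+1 = n.
Proof. by rewrite prednK. Qed.
Lemma n_dvd_p : (n %| (s * n).-1.+1)%N.
Proof. by rewrite pE dvdn_mull. Qed.

Lemma red_piE (a : lamp (s * n) k) x : val (red_pi s a x) = (val (a x) %% n)%N.
Proof.
rewrite /red_pi mkfsE; case: ifP => [_|/negbT /notsupp ->].
  by apply: inordK; rewrite nE ltn_pmod.
by rewrite /= mod0n.
Qed.

Lemma red_pi_ext (a b : lamp (s * n) k) :
  (forall x, val (a x) = val (b x) %[mod n])%N -> red_pi s a = red_pi s b.
Proof. by move=> H; apply/fsfunP => x; apply: val_inj; rewrite /= !red_piE H. Qed.

Lemma red_pi_eq (a b : lamp (s * n) k) x :
  red_pi s a = red_pi s b -> (val (a x) = val (b x) %[mod n])%N.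
Proof. by move=> E; rewrite -!red_piE E. Qed.

Lemma red_pi_add (a b : lamp (s * n) k) :
  red_pi s (lamp_add a b) = lamp_add (red_pi s a) (red_pi s b).
Proof.
apply/fsfunP => x; apply: val_inj.
rewrite red_piE !lamp_addE valD /= !red_piE nE modnDm.
by rewrite modn_dvdm // n_dvd_p.
Qed.

Lemma red_pi_alpha z (a : lamp (s * n) k) :
  red_pi s (alpha z a) = alpha z (red_pi s a).
Proof. by apply/fsfunP => x; apply: val_inj; rewrite red_piE !alphaE red_piE. Qed.

Lemma red_Pi_hom : whom (@red_Pi s n k).
Proof.
by move=> g h; rewrite /red_Pi /wr_mul /= red_pi_add red_pi_alpha.
Qed.

Definition liftl (a : lamp n k) : lamp (s * n) k :=
  mkfs (finsupp a) (fun y => inord (val (a y))).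
Definition liftw (x : wr n k) : wr (s * n) k := (liftl x.1, x.2).

Lemma liftlE a x : val (liftl a x) = val (a x).
Proof.
rewrite /liftl mkfsE; case: ifP => [_|/negbT /notsupp -> //].
apply: inordK; rewrite pE; apply: (leq_trans (ltn_ord (a x))).
by rewrite nE leq_pmull.
Qed.

Lemma red_lift x : red_Pi s (liftw x) = x.
Proof.
case: x => a z; rewrite /red_Pi /liftw /=; congr (_, _).
apply/fsfunP => x; apply: val_inj; rewrite red_piE liftlE modn_small //.
by apply: (leq_trans (ltn_ord (a x))); rewrite nE.
Qed.

Lemma red_pi0 : red_pi s (lamp0 (s * n) k) = lamp0 n k.
Proof. by apply/fsfunP => x; apply: val_inj; rewrite red_piE !lamp0E mod0n. Qed.

End Red.
Section Key.
Local Open Scope ring_scope.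
Variables (s n k : nat).
Hypotheses (s_gt0 : (0 < s)%N) (n_gt0 : (0 < n)%N).
Variable phi : wr (s * n) k -> wr (s * n) k.
Hypothesis Hphi : whom phi.

Lemma key g1 g2 : red_Pi s g1 = red_Pi s g2 -> red_Pi s (phi g1) = red_Pi s (phi g2).
Proof.
move=> E.
have E2 : g1.2 = g2.2 := congr1 snd E.
have E1 : red_pi s g1.1 = red_pi s g2.1 := congr1 fst E.
pose tau := mkfs (finsupp g1.1 `|` finsupp g2.1)%fset (fun x => g1.1 x - g2.1 x).
have tauE x : tau x = g1.1 x - g2.1 x.
  rewrite /tau mkfsE in_fsetU; case: ifP => // /negbT.
  by rewrite negb_or => /andP[/notsupp -> /notsupp ->]; rewrite subrr.
have decomp : g1 = wr_mul (tau, 0) g2.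
  apply: wr_ext => [x|] /=; last by rewrite add0r E2.
  by rewrite lamp_addE alphaE subr0 tauE subrK.
have dvd x : (n %| val (tau x))%N.
  have H := red_pi_eq n_gt0 x E1.
  have Hv := ltnW (ltn_ord (g2.1 x)).
  rewrite tauE valD valN /dvdn modn_dvdm ?n_dvd_p //.
  rewrite -modnDmr modn_dvdm ?n_dvd_p // modnDmr.
  rewrite -modnDml H modnDml subnKC //.
  by have := n_dvd_p s_gt0 n_gt0; rewrite /dvdn.
pose sg := mkfs (finsupp tau) (fun x => (inord (val (tau x) %/ n) : coef (s * n))).
have sigE x : val (sg x) = (val (tau x) %/ n)%N.
  rewrite /sg mkfsE; case: ifP => [_|/negbT /notsupp ->]; last by rewrite /= div0n.
  apply: inordK; apply: leq_ltn_trans (ltn_ord (tau x)); exact: leq_div.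
have tauP : wpow (sg, 0) n = (tau, 0).
  apply: wr_ext => [y|] /=; last by rewrite wpow_tors2.
  rewrite wpow_tors1; apply: val_inj; rewrite valMn sigE divnK ?dvd //.
  by rewrite modn_small // ltn_ord.
rewrite decomp -tauP Hphi hom_pow // red_Pi_hom //.
have -> : red_Pi s (wpow (phi (sg, 0)) n) = wr_one n k.
  have -> : phi (sg, 0) = ((phi (sg, 0)).1, 0).
    by move: (@hom_tors _ _ phi sg Hphi); case: (phi (sg, 0)) => ? ? /= ->.
  apply: wr_ext => [x|] /=; last by rewrite wpow_tors2.
  apply: val_inj; rewrite red_piE // wpow_tors1 lamp0E valMn.
  by rewrite modn_dvdm ?n_dvd_p // modnMl.
by rewrite wmul1.
Qed.

Definition psi_of (x : wr n k) : wr n k := red_Pi s (phi (liftw s x)).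

Lemma psi_comm g : red_Pi s (phi g) = psi_of (red_Pi s g).
Proof. by apply: key; rewrite red_lift. Qed.

Lemma psi_hom : whom psi_of.
Proof.
move=> x y; rewrite -{1}(red_lift s_gt0 n_gt0 x) -{1}(red_lift s_gt0 n_gt0 y).
by rewrite -red_Pi_hom // -psi_comm Hphi red_Pi_hom.
Qed.

End Key.
Lemma tconj_refl m k (f : wr m k -> wr m k) (Hf : whom f) g : tconj f g g.
Proof. by exists (wr_one m k); rewrite winv1 whom1 // wmul1 wmulg1. Qed.

Lemma tconj_trans m k (f : wr m k -> wr m k) (Hf : whom f) a b c :
  tconj f a b -> tconj f b c -> tconj f a c.
Proof.
case=> h ->; case=> h' ->; exists (wr_mul h h').
by rewrite winvM Hf !wmulA.
Qed.

Lemma tconj_map m1 m2 k (P : wr m1 k -> wr m2 k) (f1 : wr m1 k -> wr m1 k)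
  (f2 : wr m2 k -> wr m2 k) (HP : whom P) (comm : forall g, P (f1 g) = f2 (P g)) g g0 :
  tconj f1 g g0 -> tconj f2 (P g) (P g0).
Proof. by case=> h ->; exists (P h); rewrite !HP comm whomV. Qed.

Theorem theorem3p2 (s n k : nat) (s_gt0 : (0 < s)%N) (n_gt0 : (0 < n)%N)
    (k_gt0 : (0 < k)%N)
    (phi : wr (s * n) k -> wr (s * n) k) (phi_aut : is_aut phi) :
  exists psi : wr n k -> wr n k,
    [/\ is_aut psi,
        (forall g, red_Pi s (phi g) = psi (red_Pi s g)),
        (forall a, red_pi s (restr_tors phi a) = restr_tors psi (red_pi s a)),
        (forall z, induced_quot phi z = induced_quot psi z)
      & (reid_classes psi #<= reid_classes phi)%card].
Proof.
case: phi_aut => [[phiV c1 c2] Hphi].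
have HphiV : whom phiV.
  by move=> g h; apply: (can_inj c1); rewrite Hphi !c2.
have comm := psi_comm s_gt0 n_gt0 Hphi.
have commV := psi_comm s_gt0 n_gt0 HphiV.
have HPi : whom (@red_Pi s n k) := red_Pi_hom s_gt0 n_gt0.
exists (psi_of phi); split.
- split; last exact: psi_hom.
  exists (psi_of phiV) => x; rewrite -(red_lift s_gt0 n_gt0 x).
    by rewrite -comm -commV c1.
  by rewrite -commV -comm c2.
- exact: comm.
- by move=> a; have := congr1 fst (comm (a, 0%R)).
- move=> z; have := congr1 snd (comm (lamp0 _ _, z)).
  by rewrite /red_Pi /= red_pi0.
pose F (C : set (wr (s * n) k)) : set (wr n k) :=
  [set h | exists g, C g /\ tconj (psi_of phi) h (red_Pi s g)]%classic.
have sub : (reid_classes (psi_of phi) `<=` F @` reid_classes phi)%classic.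
  move=> X [x _ <-]; exists [set g | tconj phi g (liftw s x)]%classic.
    by exists (liftw s x).
  apply/seteqP; split => h /=.
  - case=> g [Hg Hh]; apply: (tconj_trans (psi_hom s_gt0 n_gt0 Hphi) Hh).
    rewrite -(red_lift s_gt0 n_gt0 x); exact: (tconj_map HPi comm Hg).
  - move=> Hh; exists (liftw s x); split; first exact: tconj_refl.
    by rewrite red_lift.
exact: card_le_trans (subset_card_le sub) (card_image_le _ _).
Qed.
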